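(* Let $S$ be a finite alphabet, $X = S^{\mathbb{Z}}$ the full shift, and $f : X \to X$ a cellular automaton. Then the language of the nonwandering set $\mathcal{N}(f)$ is a $\Sigma^1_1$ set.
   Context: A cellular automaton on $X = S^{\mathbb{Z}}$ (product topology) is a continuous shift-commuting map $f: X \to X$. The nonwandering set of $f$ is $\mathcal{N}(f) = \{x \in X \mid x \in \bigcap_{n \in \mathbb{N}} \overline{\bigcup_{k \geq n} \{f^k(x)\}}\}$, i.e. the set of configurations that are limit points of their own orbit. The language of $Y \subseteq S^{\mathbb{Z}}$ is the set of words $w \in S^*$ with $w = y_{[0,k-1]}$ for some $y\in Y$, $k \in \mathbb{N}$, viewed as a subset of $\mathbb{N}$ via a computable bijection. A set $P \subseteq \mathbb{N}$ is $\Sigma^1_1$ if $w \in P \iff (\exists C \subseteq \mathbb{N})(\forall m \in \mathbb{N})(\exists \ell \in \mathbb{N}) R(C,m,\ell,w)$ for some recursive predicate $R$. *)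

(* Defs.v *)
From mathcomp Require Import all_boot.
From Stdlib Require Import ZArith.
Local Open Scope nat_scope.
Set Implicit Arguments. Unset Strict Implicit. Unset Printing Implicit Defensive.

Definition config (S : Type) := Z -> S.

Definition shift (S : Type) (x : config S) : config S := fun i => x (i + 1)%Z.

(* x and y agree on the window [-r, r]; the sets {y | agree x y r} form a
   neighbourhood base of x in the product topology of discrete spaces S *)
Definition agree (S : Type) (x y : config S) (r : nat) : Prop :=
  forall i : Z, (- Z.of_nat r <= i <= Z.of_nat r)%Z -> x i = y i.

(* continuity of f : X -> X for the product topology (S discrete):
   every coordinate of the image depends continuously on x, i.e. for each
   x and i there is a basic neighbourhood of x on which (f .) i is constant *)
Definition prod_continuous (S : Type) (f : config S -> config S) : Prop :=
  forall (x : config S) (i : Z), exists r : nat,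
    forall y : config S, agree x y r -> f y i = f x i.

Definition cellular_automaton (S : Type) (f : config S -> config S) : Prop :=
  prod_continuous f /\
  (forall (x : config S) (i : Z), f (shift x) i = shift (f x) i).

(* nonwandering set: x lies in the closure of {f^k x | k >= n} for every n;
   closure in the product topology, via the basic neighbourhoods agree x _ r *)
Definition nonwandering (S : Type) (f : config S -> config S) (x : config S)
  : Prop :=
  forall n r : nat, exists k : nat, (n <= k)%nat /\ agree x (ssrnat.iter k f x) r.

Definition language (S : Type) (Y : config S -> Prop) (w : seq S) : Prop :=
  exists y : config S, Y y /\ w = [seq y (Z.of_nat j) | j <- iota 0 (size w)].

(* computable bijection S^* -> N (bijective base-#|S| numeration):
   code [::] = 0, code (a :: w) = (rank a + 1) + #|S| * code w *)
Definition word_code (S : finType) (w : seq S) : nat :=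
  foldr (fun a n => (enum_rank a).+1 + #|S| * n) 0 w.

(* syntax of partial recursive functions with an oracle C : N -> bool *)
Inductive code : Type :=
| Zero
| Succ
| Proj of nat
| Orac
| Comp of code & seq code
| Prec of code & code
| Mu of code.

(* big-step semantics relative to an oracle C; missing arguments read as 0 *)
Inductive eval (C : nat -> bool) : code -> seq nat -> nat -> Prop :=
| ev_zero xs : eval C Zero xs 0
| ev_succ xs : eval C Succ xs (nth 0 xs 0).+1
| ev_proj i xs : eval C (Proj i) xs (nth 0 xs i)
| ev_orac xs : eval C Orac xs (nat_of_bool (C (nth 0 xs 0)))
| ev_comp g hs xs ys y :
    evals C hs xs ys -> eval C g ys y -> eval C (Comp g hs) xs y
| ev_prec0 g h xs y : eval C g xs y -> eval C (Prec g h) (0 :: xs) y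
| ev_precS g h n xs z y :
    eval C (Prec g h) (n :: xs) z -> eval C h (n :: z :: xs) y ->
    eval C (Prec g h) (n.+1 :: xs) y
| ev_mu g xs n :
    eval C g (n :: xs) 0 ->
    (forall k : nat, (k < n)%nat -> exists v : nat, v <> 0 /\ eval C g (k :: xs) v) ->
    eval C (Mu g) xs n
with evals (C : nat -> bool) : seq code -> seq nat -> seq nat -> Prop :=
| evs_nil xs : evals C [::] xs [::]
| evs_cons h hs xs y ys :
    eval C h xs y -> evals C hs xs ys -> evals C (h :: hs) xs (y :: ys).

Definition recursive_pred
  (R : (nat -> bool) -> nat -> nat -> nat -> Prop) : Prop :=
  exists e : code, forall (C : nat -> bool) (m l w : nat),
    (R C m l w -> eval C e [:: m; l; w] 1) /\
    (~ R C m l w -> eval C e [:: m; l; w] 0).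

Definition Sigma11 (P : nat -> Prop) : Prop :=
  exists R : (nat -> bool) -> nat -> nat -> nat -> Prop,
    recursive_pred R /\
    forall w : nat,
      P w <-> exists C : nat -> bool, forall m : nat, exists l : nat, R C m l w.

(* Main.v *)
Require Import Defs.
From mathcomp Require Import all_boot.
From Stdlib Require Import ZArith.
From Stdlib Require Import Lia.
From mathcomp Require Import zify.
From Stdlib Require Import Classical ClassicalEpsilon FunctionalExtensionality.
Set Implicit Arguments. Unset Strict Implicit. Unset Printing Implicit Defensive.

Fixpoint cconst (n : nat) : code :=
  if n is n'.+1 then Comp Succ [:: cconst n'] else Zero.

Lemma evs2 C h1 h2 xs y1 y2 : eval C h1 xs y1 -> eval C h2 xs y2 ->
  evals C [:: h1; h2] xs [:: y1; y2].
Proof. by move=> H1 H2; apply: evs_cons H1 (evs_cons H2 (evs_nil _ _)). Qed.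
Lemma evs1 C h1 xs y1 : eval C h1 xs y1 -> evals C [:: h1] xs [:: y1].
Proof. by move=> H1; apply: evs_cons H1 (evs_nil _ _). Qed.

Lemma ev_const C n xs : eval C (cconst n) xs n.
Proof.
elim: n => [|n IH] /=; first exact: ev_zero.
apply: ev_comp (evs1 IH) _; exact: (ev_succ C [:: n]).
Qed.

Definition cadd : code := Defs.Prec (Proj 0) (Comp Succ [:: Proj 1]).
Lemma ev_add C n x : eval C cadd [:: n; x] (n + x).
Proof.
elim: n => [|n IH]; first exact: (ev_prec0 _ (ev_proj C 0 [:: x])).
apply: (ev_precS IH).
apply: ev_comp (evs1 (ev_proj C 1 [:: n; n + x; x])) _.
by rewrite addSn; exact: (ev_succ C [:: n + x]).
Qed.

Definition cmul : code := Defs.Prec Zero (Comp cadd [:: Proj 1; Proj 2]).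
Lemma ev_mul C n x : eval C cmul [:: n; x] (n * x).
Proof.
elim: n => [|n IH]; first exact: (ev_prec0 _ (ev_zero C [:: x])).
apply: (ev_precS IH).
apply: ev_comp (evs2 (ev_proj C 1 [:: n; n * x; x]) (ev_proj C 2 [:: n; n * x; x])) _.
by rewrite mulSn addnC; exact: ev_add.
Qed.

Definition cpred : code := Defs.Prec Zero (Proj 0).
Lemma ev_pred C n : eval C cpred [:: n] n.-1.
Proof.
elim: n => [|n IH]; first exact: (ev_prec0 _ (ev_zero C [::])).
exact: (ev_precS IH (ev_proj C 0 [:: n; n.-1])).
Qed.

Definition csubr : code := Defs.Prec (Proj 0) (Comp cpred [:: Proj 1]).
Lemma ev_subr C y x : eval C csubr [:: y; x] (x - y).
Proof.
elim: y => [|y IH]; first by rewrite subn0; exact: (ev_prec0 _ (ev_proj C 0 [:: x])).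
apply: (ev_precS IH).
apply: ev_comp (evs1 (ev_proj C 1 [:: y; x - y; x])) _.
by rewrite subnS; exact: ev_pred.
Qed.

Definition csub (a b : code) : code := Comp csubr [:: b; a].
Lemma ev_sub C a b xs x y : eval C a xs x -> eval C b xs y -> eval C (csub a b) xs (x - y).
Proof. by move=> Ha Hb; apply: ev_comp (evs2 Hb Ha) (ev_subr _ _ _). Qed.

Definition cisz (a : code) : code := Comp csubr [:: a; cconst 1].
Lemma ev_isz C a xs x : eval C a xs x -> eval C (cisz a) xs (1 - x).
Proof. by move=> Ha; apply: ev_comp (evs2 Ha (ev_const _ _ _)) (ev_subr _ _ _). Qed.

Definition cadd2 (a b : code) : code := Comp cadd [:: a; b].
Lemma ev_add2 C a b xs x y : eval C a xs x -> eval C b xs y -> eval C (cadd2 a b) xs (x + y).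
Proof. by move=> Ha Hb; apply: ev_comp (evs2 Ha Hb) (ev_add _ _ _). Qed.
Definition cmul2 (a b : code) : code := Comp cmul [:: a; b].
Lemma ev_mul2 C a b xs x y : eval C a xs x -> eval C b xs y -> eval C (cmul2 a b) xs (x * y).
Proof. by move=> Ha Hb; apply: ev_comp (evs2 Ha Hb) (ev_mul _ _ _). Qed.

Inductive tm := TV of nat | TC of nat | TA of tm & tm | TM of tm & tm.
Inductive fm := FQ of tm | FEq of tm & tm | FLe of tm & tm | FNot of fm
  | FAnd of fm & fm | FAll of tm & fm.

Fixpoint tv (e : seq nat) (t : tm) : nat :=
  match t with TV i => nth 0 e i | TC n => n | TA a b => tv e a + tv e b
  | TM a b => tv e a * tv e b end.

Fixpoint sem (C : nat -> bool) (e : seq nat) (p : fm) : bool :=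
  match p with
  | FQ t => C (tv e t)
  | FEq a b => tv e a == tv e b
  | FLe a b => tv e a <= tv e b
  | FNot q => ~~ sem C e q
  | FAnd q r => sem C e q && sem C e r
  | FAll t q => all (fun x => sem C (x :: e) q) (iota 0 (tv e t))
  end.

Fixpoint ctm (t : tm) : code :=
  match t with TV i => Proj i | TC n => cconst n | TA a b => cadd2 (ctm a) (ctm b)
  | TM a b => cmul2 (ctm a) (ctm b) end.

Lemma ev_tm C t e : eval C (ctm t) e (tv e t).
Proof.
elim: t => [i|n|a Ha b Hb|a Ha b Hb] /=.
- exact: ev_proj.
- exact: ev_const.
- exact: ev_add2.
- exact: ev_mul2.
Qed.

Fixpoint cfm (k : nat) (p : fm) : code :=
  match p with
  | FQ t => Comp Orac [:: ctm t]
  | FEq a b => cisz (cadd2 (csub (ctm a) (ctm b)) (csub (ctm b) (ctm a)))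
  | FLe a b => cisz (csub (ctm a) (ctm b))
  | FNot q => cisz (cfm k q)
  | FAnd q r => cmul2 (cfm k q) (cfm k r)
  | FAll t q => Comp (Defs.Prec (cconst 1)
        (cmul2 (Proj 1) (Comp (cfm k.+1 q) (Proj 0 :: map Proj (iota 2 k)))))
        (ctm t :: map Proj (iota 0 k))
  end.

Lemma evs_projs C s k xs :
  evals C (map Proj (iota s k)) xs (map (nth 0 xs) (iota s k)).
Proof.
elim: k s => [|k IH] s /=; first exact: evs_nil.
apply: evs_cons (IH _); exact: ev_proj.
Qed.

Lemma ev_fm C p : forall k e, size e = k -> eval C (cfm k p) e (sem C e p).
Proof.
elim: p => [t|a b|a b|q IH|q IHq r IHr|t q IH] k e He /=.
- apply: ev_comp (evs1 (ev_tm C t e)) _.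
  exact: (ev_orac C [:: tv e t]).
- have -> : nat_of_bool (tv e a == tv e b) = 1 - ((tv e a - tv e b) + (tv e b - tv e a)).
    case: eqP => [->|/eqP]; first by rewrite subnn.
    by rewrite neq_ltn => /orP [] H; rewrite ?(ltnW H) /=;
      [rewrite -subn_gt0 in H | rewrite -subn_gt0 in H];
      [rewrite addnC|]; case: (_ - _) H => // n _; rewrite addSn.
  by apply: ev_isz; apply: ev_add2; apply: ev_sub; exact: ev_tm.
- have -> : nat_of_bool (tv e a <= tv e b) = 1 - (tv e a - tv e b).
    by rewrite -subn_eq0; case: (_ - _).
  by apply: ev_isz; apply: ev_sub; exact: ev_tm.
- have -> : nat_of_bool (~~ sem C e q) = 1 - sem C e q by case: (sem C e q).
  exact: ev_isz (IH _ _ He).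
- have -> : nat_of_bool (sem C e q && sem C e r) = sem C e q * sem C e r.
    by case: (sem C e q); case: (sem C e r).
  exact: ev_mul2 (IHq _ _ He) (IHr _ _ He).
- have Hargs : evals C (ctm t :: map Proj (iota 0 k)) e (tv e t :: e).
    apply: evs_cons (ev_tm _ _ _) _.
    have E : map (nth 0 e) (iota 0 k) = e by rewrite -He; exact: (mkseq_nth 0 e).
    by move: (evs_projs C 0 k e); rewrite E.
  apply: ev_comp Hargs _.
  elim: (tv e t) => [|n IHn]; first exact: (ev_prec0 _ (ev_const C 1 e)).
  apply: (ev_precS IHn).
  have -> : nat_of_bool (all (fun x => sem C (x :: e) q) (iota 0 n.+1)) =
     (all (fun x => sem C (x :: e) q) (iota 0 n)) * sem C (n :: e) q.
    by rewrite -addn1 iotaD all_cat /= andbT add0n; case: (all _ _); case: (sem _ _ _).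
  apply: ev_mul2; first exact: (ev_proj C 1 [:: n, _ & e]).
  have Ha : evals C (Proj 0 :: map Proj (iota 2 k)) [:: n, nat_of_bool (all (fun x => sem C (x :: e) q) (iota 0 n)) & e] (n :: e).
    apply: evs_cons; first exact: (ev_proj C 0 [:: n, _ & e]).
    have E : map (nth 0 [:: n, nat_of_bool (all (fun x => sem C (x :: e) q) (iota 0 n)) & e]) (iota 2 k) = e.
      rewrite (iotaDl 2 0) -map_comp /=.
      rewrite -He; exact: (mkseq_nth 0 e).
    by move: (evs_projs C 2 k [:: n, nat_of_bool (all (fun x => sem C (x :: e) q) (iota 0 n)) & e]); rewrite E.
  apply: ev_comp Ha _.
  by apply: IH; rewrite /= He.
Qed.

Definition FOr p q := FNot (FAnd (FNot p) (FNot q)).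
Definition FImp p q := FNot (FAnd p (FNot q)).
Definition FIff p q := FAnd (FImp p q) (FImp q p).
Definition FEx t p := FNot (FAll t (FNot p)).
Definition FTrue := FEq (TC 0) (TC 0).
Definition FFalse := FNot FTrue.
Definition FBigAnd (l : seq fm) := foldr FAnd FTrue l.
Definition FBigOr (l : seq fm) := foldr FOr FFalse l.

Lemma sem_or C e p q : sem C e (FOr p q) = sem C e p || sem C e q.
Proof. by rewrite /= negb_and !negbK. Qed.
Lemma sem_imp C e p q : sem C e (FImp p q) = sem C e p ==> sem C e q.
Proof. by rewrite /= negb_and negbK; case: (sem C e p). Qed.
Lemma sem_iff C e p q : sem C e (FIff p q) = (sem C e p == sem C e q).
Proof. by rewrite /= !negb_and !negbK; case: (sem C e p); case: (sem C e q). Qed.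
Lemma sem_ex C e t p : sem C e (FEx t p) = has (fun x => sem C (x :: e) p) (iota 0 (tv e t)).
Proof. by rewrite /= -has_predC; apply: eq_has => x /=; rewrite negbK. Qed.
Lemma sem_bigand C e l : sem C e (FBigAnd l) = all (sem C e) l.
Proof. by elim: l => //= p l ->. Qed.
Lemma sem_bigor C e l : sem C e (FBigOr l) = has (sem C e) l.
Proof. by elim: l => //= p l <-; rewrite -sem_or. Qed.

Definition recR (p : fm) (C : nat -> bool) (m l w : nat) : Prop := sem C [:: m; l; w] p.
Lemma recR_rec p : recursive_pred (recR p).
Proof.
exists (cfm 3 p) => C m l w; rewrite /recR.
have H := ev_fm C p (e := [:: m; l; w]) (erefl 3).
split => [E|E]; first by move: H; rewrite E.
by move: H; rewrite (negbTE (introN idP E)).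
Qed.
Arguments FOr : simpl never.
Arguments FImp : simpl never.
Arguments FIff : simpl never.
Arguments FEx : simpl never.
Arguments FBigAnd : simpl never.
Arguments FBigOr : simpl never.

Lemma agree_sym (S : Type) (x y : config S) r : agree x y r -> agree y x r.
Proof. by move=> H i Hi; rewrite H. Qed.
Lemma agree_trans (S : Type) (x y z : config S) r : agree x y r -> agree y z r -> agree x z r.
Proof. by move=> H1 H2 i Hi; rewrite H1 // H2. Qed.
Lemma agree_mono (S : Type) (x y : config S) r r' : (r' <= r)%nat -> agree x y r -> agree x y r'.
Proof. move=> /leP Hr H i Hi; apply: H; lia. Qed.

Lemma pigeon_seq (I : eqType) (Q : I -> nat -> Prop) (s : seq I) :
  (forall i m m', (m' <= m)%nat -> Q i m -> Q i m') ->
  (forall m, exists i, i \in s /\ Q i m) -> exists i, i \in s /\ forall m, Q i m.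
Proof.
move=> Hmono; elim: s => [|a s IH] H.
  by case: (H 0) => i [].
case: (classic (forall m, Q a m)) => [Ha|Hna]; first by exists a; rewrite mem_head.
case: (not_all_ex_not _ _ Hna) => m0 Hm0.
case: IH => [m|i [Hi Hq]]; last by exists i; rewrite inE Hi orbT.
case: (H (maxn m m0)) => i [Hi Hq].
move: Hi; rewrite inE => /orP [/eqP Ei|Hi].
  by subst i; case: Hm0; apply: Hmono Hq; rewrite leq_maxr.
by exists i; split => //; apply: Hmono Hq; rewrite leq_maxl.
Qed.

Lemma pigeon (I : finType) (Q : I -> nat -> Prop) :
  (forall i m m', (m' <= m)%nat -> Q i m -> Q i m') ->
  (forall m, exists i, Q i m) -> exists i, forall m, Q i m.
Proof.
move=> Hmono H.
case: (@pigeon_seq I Q (enum I) Hmono) => [m|i [_ Hi]]; last by exists i.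
by case: (H m) => i Hi; exists i; rewrite mem_enum.
Qed.

Definition bad (S : Type) (f : config S -> config S) n (x : config S) m :=
  exists x1 x2, agree x x1 n /\ agree x x2 n /\ agree x1 x2 m /\ f x1 0%Z <> f x2 0%Z.

Lemma bad_mono (S : Type) f n (x : config S) m m' : (m' <= m)%nat -> bad f n x m -> bad f n x m'.
Proof.
move=> Hm [x1 [x2 [H1 [H2 [H3 H4]]]]]; exists x1, x2; do 3?split => //.
exact: agree_mono H3.
Qed.

Definition upd (S : Type) (x : config S) (n : nat) (a b : S) : config S :=
  fun i => if Z.eq_dec i (- Z.of_nat n.+1)%Z then a
           else if Z.eq_dec i (Z.of_nat n.+1) then b else x i.

Lemma step_ib (S : finType) (f : config S -> config S) n (x : config S) :
  (forall m, bad f n x m) -> exists x', agree x x' n /\ forall m, bad f n.+1 x' m.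
Proof.
move=> Hib.
pose Q (ab : S * S) m := bad f n.+1 (upd x n ab.1 ab.2) m.
case: (@pigeon _ Q) => [ab m m' Hm|m|ab Hab].
- exact: bad_mono.
- case: (Hib (maxn m n.+1)) => x1 [x2 [H1 [H2 [H3 H4]]]].
  exists (x1 (- Z.of_nat n.+1)%Z, x1 (Z.of_nat n.+1)); rewrite /Q /=.
  have A1 : agree (upd x n (x1 (- Z.of_nat n.+1)%Z) (x1 (Z.of_nat n.+1))) x1 n.+1.
    move=> i Hi; rewrite /upd.
    case: Z.eq_dec => [E|Ha] /=; first by rewrite E.
    case: Z.eq_dec => [E|Hb] /=; first by rewrite E.
    apply: H1; lia.
  exists x1, x2; split => //; split.
    apply: agree_trans A1 (agree_mono _ H3); exact: leq_maxr.
  by split => //; apply: agree_mono H3; exact: leq_maxl.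
- exists (upd x n ab.1 ab.2); split => //.
  move=> i Hi; rewrite /upd; case: Z.eq_dec => [E|Ha] /=; first lia.
  by case: Z.eq_dec => [E|Hb] //=; lia.
Qed.

Lemma start_ib (S : finType) (f : config S -> config S) :
  (forall r, exists x y, agree x y r /\ f x 0%Z <> f y 0%Z) ->
  exists x, forall m, bad f 0 x m.
Proof.
move=> H.
pose Q (a : S) m := bad f 0 (fun _ => a) m.
case: (@pigeon _ Q) => [a m m' Hm|m|a Ha]; last by exists (fun _ => a).
- exact: bad_mono.
- case: (H m) => x1 [x2 [H3 H4]]; exists (x1 0%Z); exists x1, x2.
  have A : agree (fun _ => x1 0%Z) x1 0 by move=> i Hi; have -> : i = 0%Z by lia.
  split => //; split => //; apply: agree_trans A (agree_mono _ H3); exact: leq0n.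
Qed.

Lemma uniform_radius (S : finType) (f : config S -> config S) :
  prod_continuous f -> exists rho, forall x y, agree x y rho -> f x 0%Z = f y 0%Z.
Proof.
move=> Hc; apply: NNPP => Hn.
have H : forall r, exists x y, agree x y r /\ f x 0%Z <> f y 0%Z.
  move=> r; apply: NNPP => Hr; apply: Hn; exists r => x y Hxy.
  apply: NNPP => Hne; apply: Hr; by exists x, y.
have Hst := @step_ib S f.
pose T n := {x : config S | forall m, bad f n x m}.
pose st n (u : T n) : T n.+1 :=
  let: exist x Hx := u in
  let: exist x' H := constructive_indefinite_description _ (Hst n x Hx) in
  exist _ x' (proj2 H).
have st_agree : forall n (u : T n), agree (proj1_sig u) (proj1_sig (st n u)) n.
  move=> n [x Hx] /=; rewrite /st /=.
  by case: (constructive_indefinite_description _ (Hst n x Hx)) => x' [].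
have t0 : T 0.
  case: (constructive_indefinite_description _ (start_ib H)) => x Hx; exact: (exist _ x Hx).
pose fix sq n : T n := if n is n'.+1 then st n' (sq n') else t0.
pose xs n := proj1_sig (sq n).
have chain : forall j n, (j <= n)%nat -> agree (xs j) (xs n) j.
  move=> j n /subnK <-; elim: (n - j) => [|d IH]; first by move=> i.
  rewrite addSn; apply: agree_trans IH _.
  apply: agree_mono (st_agree _ _); exact: leq_addl.
pose xl : config S := fun i => xs (Z.abs_nat i) i.
have Hxl : forall n, agree xl (xs n) n.
  move=> n i Hi; rewrite /xl; apply: chain; first by apply/leP; lia.
  lia.
case: (Hc xl 0%Z) => r0 Hr0.
case: (proj2_sig (sq r0) 0) => x1 [x2 [H1 [H2 [_ H4]]]].
apply: H4; rewrite (Hr0 x1) ?(Hr0 x2) //.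
  exact: agree_trans (Hxl r0) H2.
exact: agree_trans (Hxl r0) H1.
Qed.

Lemma translate (S : Type) (f : config S -> config S) :
  (forall (x : config S) (i : Z), f (Defs.shift x) i = Defs.shift (f x) i) ->
  forall (k : nat) (x : config S) (j : Z), f (fun t : Z => x (t + Z.of_nat k)%Z) j = f x (j + Z.of_nat k)%Z.
Proof.
move=> Hs; elim => [|k IH] x j.
  have -> : (fun t => x (t + Z.of_nat 0)%Z) = x by apply: functional_extensionality => t; rewrite Z.add_0_r.
  by rewrite Z.add_0_r.
have -> : (fun t => x (t + Z.of_nat k.+1)%Z) = Defs.shift (fun t => x (t + Z.of_nat k)%Z).
  apply: functional_extensionality => t; rewrite /Defs.shift; congr x; lia.
rewrite Hs /Defs.shift IH; congr f; lia.
Qed.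

Lemma translate0 (S : Type) (f : config S -> config S) :
  (forall (x : config S) (i : Z), f (Defs.shift x) i = Defs.shift (f x) i) ->
  forall (x : config S) (i : Z), f x i = f (fun t : Z => x (t + i)%Z) 0%Z.
Proof.
move=> Hs x i; case: (Z_le_gt_dec 0 i) => Hi.
  have := translate Hs (Z.to_nat i) x 0; rewrite Z2Nat.id // Z.add_0_l => ->//.
set u := fun t => x (t + i)%Z.
have -> : x = fun t => u (t + Z.of_nat (Z.to_nat (- i)))%Z.
  apply: functional_extensionality => t; rewrite /u; congr x; lia.
rewrite translate //; congr f; lia.
Qed.

Definition pr (x y : nat) : nat := (x + y) * (x + y + 1) + 2 * y.
Definition tpr a b := TA (TM (TA a b) (TA (TA a b) (TC 1))) (TM (TC 2) b).
Lemma tv_tpr e a b : tv e (tpr a b) = pr (tv e a) (tv e b).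
Proof. by []. Qed.

Lemma pr_inj x y x' y' : pr x y = pr x' y' -> x = x' /\ y = y'.
Proof.
rewrite /pr => E.
have Hs : x + y = x' + y'.
  have key : forall a b a' b', a + b < a' + b' -> (a + b) * (a + b + 1) + 2 * b < (a' + b') * (a' + b' + 1) + 2 * b'.
    move=> a b a1 b1 H; nia.
  case: (ltngtP (x + y) (x' + y')) => // H.
    by have := key _ _ _ _ H; rewrite E ltnn.
  by have := key _ _ _ _ H; rewrite E ltnn.
move: E; rewrite Hs => /eqP; rewrite eqn_add2l eqn_mul2l /= => /eqP Hy.
split => //; apply/eqP; rewrite -(eqn_add2r y) Hs Hy //.
Qed.

Definition zbc t a b s := pr 0 (pr t (pr a (pr b s))).
Definition kbc n r k := pr 1 (pr n (pr r k)).
Definition rbc j v := pr 2 (pr j v).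
Definition ZB t a b s := tpr (TC 0) (tpr t (tpr a (tpr b s))).
Definition KB n r k := tpr (TC 1) (tpr n (tpr r k)).
Definition RB j v := tpr (TC 2) (tpr j v).


Arguments pr : simpl never.
Arguments zbc : simpl never.
Arguments kbc : simpl never.
Arguments rbc : simpl never.

Lemma tv_ZB e t a b s : tv e (ZB t a b s) = zbc (tv e t) (tv e a) (tv e b) (tv e s). Proof. by []. Qed.
Lemma tv_KB e t a b : tv e (KB t a b) = kbc (tv e t) (tv e a) (tv e b). Proof. by []. Qed.
Lemma tv_RB e t a : tv e (RB t a) = rbc (tv e t) (tv e a). Proof. by []. Qed.
Lemma tv_TC e n : tv e (TC n) = n. Proof. by []. Qed.
Lemma tv_TA e a b : tv e (TA a b) = tv e a + tv e b. Proof. by []. Qed.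
Lemma tv_TM e a b : tv e (TM a b) = tv e a * tv e b. Proof. by []. Qed.
Lemma sem_Q C e t : sem C e (FQ t) = C (tv e t). Proof. by []. Qed.
Lemma sem_Eq C e a b : sem C e (FEq a b) = (tv e a == tv e b). Proof. by []. Qed.
Lemma sem_Le C e a b : sem C e (FLe a b) = (tv e a <= tv e b). Proof. by []. Qed.
Lemma sem_Not C e p : sem C e (FNot p) = ~~ sem C e p. Proof. by []. Qed.
Lemma sem_And C e p q : sem C e (FAnd p q) = sem C e p && sem C e q. Proof. by []. Qed.
Lemma preimE (A B : Type) (f : A -> B) (a : pred B) x : preim f a x = a (f x). Proof. by []. Qed.
Definition semE := (sem_or, sem_imp, sem_iff, sem_ex, sem_bigand, sem_bigor,
  sem_Q, sem_Eq, sem_Le, sem_Not, sem_And, tv_ZB, tv_KB, tv_RB, tv_TC, tv_TA, tv_TM).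

Definition rk (S : finType) (c : S) : nat := enum_rank c.


Definition onehotF (N : nat) T A B :=
  FAnd (FBigOr [seq FQ (ZB T A B (TC s)) | s <- iota 0 N])
       (FBigAnd [seq FBigAnd [seq FImp (FAnd (FQ (ZB T A B (TC s))) (FQ (ZB T A B (TC s'))))
                          (FEq (TC s) (TC s')) | s' <- iota 0 N] | s <- iota 0 N]).
Definition shinvF (N : nat) T A B :=
  FBigAnd [seq FIff (FQ (ZB T A B (TC s))) (FQ (ZB T (TA A (TC 1)) (TA B (TC 1)) (TC s)))
          | s <- iota 0 N].
Definition localF (S : finType) (rho : nat) (Phi : ((rho + rho).+1).-tuple S -> S) T A B :=
  FBigAnd [seq FImp (FBigAnd [seq FQ (ZB T (TA A (TC j)) (TA B (TC rho)) (TC (rk (tnth p j))))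
                             | j : 'I_((rho + rho).+1) <- enum 'I_((rho + rho).+1)])
                    (FQ (ZB (TA T (TC 1)) (TA A (TC rho)) (TA B (TC rho)) (TC (rk (Phi p)))))
          | p : ((rho + rho).+1).-tuple S <- enum {: ((rho + rho).+1).-tuple S}].
Definition retF (N : nat) X1 X2 X3 X4 :=
  FImp (FAnd (FQ (KB X1 X2 X3)) (FLe X4 X2))
       (FAnd (FLe X1 X3)
          (FBigAnd [seq FAnd (FIff (FQ (ZB X3 X4 (TC 0) (TC s))) (FQ (ZB (TC 0) X4 (TC 0) (TC s))))
                             (FIff (FQ (ZB X3 (TC 0) X4 (TC s))) (FQ (ZB (TC 0) (TC 0) X4 (TC s))))
                   | s <- iota 0 N])).
Definition wordF (N : nat) J V V' :=
  FImp (FAnd (FQ (RB J V)) (FQ (RB (TA J (TC 1)) V')))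
       (FOr (FEq V (TC 0))
            (FBigOr [seq FAnd (FQ (ZB (TC 0) J (TC 0) (TC s)))
                              (FEq V (TA (TA (TC s) (TC 1)) (TM (TC N) V'))) | s <- iota 0 N])).

Definition QF (S : finType) (rho : nat) (Phi : ((rho + rho).+1).-tuple S -> S) :=
  let N := #|S| in
  FAnd (onehotF N (TV 3) (TV 2) (TV 1))
 (FAnd (shinvF N (TV 3) (TV 2) (TV 1))
 (FAnd (localF Phi (TV 3) (TV 2) (TV 1))
 (FAnd (retF N (TV 3) (TV 2) (TV 1) (TV 0))
 (FAnd (wordF N (TV 3) (TV 2) (TV 1))
       (FQ (RB (TC 0) (TV 6))))))).

Definition TOPF (S : finType) (rho : nat) (Phi : ((rho + rho).+1).-tuple S -> S) :=
  FAnd (FAll (TV 0) (FAll (TV 1) (FAll (TV 2) (FAll (TV 3) (QF Phi)))))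
       (FAll (TV 0) (FAll (TV 1) (FEx (TV 3) (FEx (TV 4)
          (FAnd (FQ (KB (TV 3) (TV 2) (TV 1))) (FQ (RB (TV 3) (TV 0)))))))).

Definition onehotP (C : nat -> bool) N t a b :=
  (exists s, s < N /\ C (zbc t a b s)) /\
  (forall s s', s < N -> s' < N -> C (zbc t a b s) -> C (zbc t a b s') -> s = s').
Definition shinvP (C : nat -> bool) N t a b :=
  forall s, s < N -> C (zbc t a b s) = C (zbc t a.+1 b.+1 s).
Definition localP (C : nat -> bool) (S : finType) (rho : nat) (Phi : ((rho + rho).+1).-tuple S -> S) t a b :=
  forall p : ((rho + rho).+1).-tuple S,
    (forall j : 'I_((rho + rho).+1), C (zbc t (a + j) (b + rho) (rk (tnth p j)))) ->
    C (zbc t.+1 (a + rho) (b + rho) (rk (Phi p))).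
Definition retP (C : nat -> bool) N n r k a :=
  C (kbc n r k) -> a <= r -> n <= k /\
  forall s, s < N -> C (zbc k a 0 s) = C (zbc 0 a 0 s) /\ C (zbc k 0 a s) = C (zbc 0 0 a s).
Definition wordP (C : nat -> bool) N j v v' :=
  C (rbc j v) -> C (rbc j.+1 v') ->
  v = 0 \/ exists s, s < N /\ C (zbc 0 j 0 s) /\ v = s + 1 + N * v'.

Lemma onehot_iff C N e T A B :
  sem C e (onehotF N T A B) <-> onehotP C N (tv e T) (tv e A) (tv e B).
Proof.
rewrite /onehotF /onehotP sem_And sem_bigor sem_bigand has_map all_map; split.
  case/andP => /hasP [s0 Hs0 Hq] /allP H; split.
    by exists s0; move: Hs0 Hq; rewrite mem_iota preimE !semE.
  move=> s s' Hs Hs' H1 H2.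
  have := H s; rewrite mem_iota Hs => /(_ isT); rewrite preimE sem_bigand all_map.
  move=> /allP /(_ s'); rewrite mem_iota Hs' => /(_ isT); rewrite preimE !semE.
  by rewrite H1 H2 /= => /eqP.
case=> [[s [Hs Hq]] H]; apply/andP; split.
  by apply/hasP; exists s; rewrite ?mem_iota // preimE !semE.
apply/allP => s1; rewrite mem_iota => H1; rewrite preimE sem_bigand all_map.
apply/allP => s2; rewrite mem_iota => H2; rewrite preimE !semE.
apply/implyP => /andP [E1 E2]; apply/eqP; exact: H E1 E2.
Qed.

Lemma shinv_iff C N e T A B :
  sem C e (shinvF N T A B) <-> shinvP C N (tv e T) (tv e A) (tv e B).
Proof.
rewrite /shinvF /shinvP sem_bigand all_map; split.
  move=> /allP H s Hs; have := H s; rewrite mem_iota Hs => /(_ isT).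
  by rewrite preimE !semE !addn1 => /eqP.
move=> H; apply/allP => s; rewrite mem_iota => Hs.
by rewrite preimE !semE !addn1 H.
Qed.

Lemma local_iff C (S : finType) rho (Phi : ((rho + rho).+1).-tuple S -> S) e T A B :
  sem C e (localF Phi T A B) <-> localP C Phi (tv e T) (tv e A) (tv e B).
Proof.
rewrite /localF /localP sem_bigand all_map; split.
  move=> /allP H p Hp; have := H p; rewrite mem_enum => /(_ isT).
  rewrite preimE sem_imp sem_bigand all_map !semE addn1 => /implyP; apply.
  by apply/allP => j _; rewrite preimE !semE.
move=> H; apply/allP => p _; rewrite preimE sem_imp sem_bigand all_map !semE addn1.
apply/implyP => /allP Hj; apply: H => j; have := Hj j.
by rewrite mem_enum preimE !semE => /(_ isT).
Qed.

Lemma ret_iff C N e X1 X2 X3 X4 :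
  sem C e (retF N X1 X2 X3 X4) <-> retP C N (tv e X1) (tv e X2) (tv e X3) (tv e X4).
Proof.
rewrite /retF /retP sem_imp !sem_And sem_bigand all_map !semE; split.
  move=> /implyP H HK Hle; move: (H (introT andP (conj HK Hle))) => /andP [Hk].
  move=> /allP Hs; split => // s Hs'.
  have := Hs s; rewrite mem_iota Hs' => /(_ isT).
  by rewrite preimE !semE => /andP [/eqP -> /eqP ->].
move=> H; apply/implyP => /andP [HK Hle]; case: (H HK Hle) => Hk Hs.
rewrite Hk; apply/allP => s; rewrite mem_iota => Hs'.
by rewrite preimE !semE; case: (Hs s Hs') => -> ->; rewrite !eqxx.
Qed.

Lemma word_iff C N e J V V' :
  sem C e (wordF N J V V') <-> wordP C N (tv e J) (tv e V) (tv e V').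
Proof.
rewrite /wordF /wordP sem_imp sem_or sem_bigor has_map !semE addn1; split.
  move=> /implyP H H1 H2; move: (H (introT andP (conj H1 H2))) => /orP [/eqP ->|]; first by left.
  move=> /hasP [s Hs]; rewrite preimE !semE => /andP [Hz /eqP Hv]; right; exists s.
  by rewrite mem_iota in Hs.
move=> H; apply/implyP => /andP [H1 H2]; case: (H H1 H2) => [->|[s [Hs [Hz Hv]]]].
  by rewrite eqxx.
apply/orP; right; apply/hasP; exists s; first by rewrite mem_iota.
by rewrite preimE !semE Hz Hv eqxx.
Qed.

Definition QP (C : nat -> bool) (S : finType) rho (Phi : ((rho + rho).+1).-tuple S -> S) x1 x2 x3 x4 n :=
  onehotP C #|S| x1 x2 x3 /\ shinvP C #|S| x1 x2 x3 /\ localP C Phi x1 x2 x3 /\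
  retP C #|S| x1 x2 x3 x4 /\ wordP C #|S| x1 x2 x3 /\ C (rbc 0 n).

Lemma Q_iff C (S : finType) rho (Phi : ((rho + rho).+1).-tuple S -> S) x1 x2 x3 x4 m l n :
  sem C [:: x4; x3; x2; x1; m; l; n] (QF Phi) <-> QP C Phi x1 x2 x3 x4 n.
Proof.
rewrite /QF /QP !sem_And sem_Q tv_RB tv_TC.
rewrite -(onehot_iff C _ [:: x4; x3; x2; x1; m; l; n] (TV 3) (TV 2) (TV 1)).
rewrite -(shinv_iff C _ [:: x4; x3; x2; x1; m; l; n] (TV 3) (TV 2) (TV 1)).
rewrite -(local_iff C Phi [:: x4; x3; x2; x1; m; l; n] (TV 3) (TV 2) (TV 1)).
rewrite -(ret_iff C _ [:: x4; x3; x2; x1; m; l; n] (TV 3) (TV 2) (TV 1) (TV 0)).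
rewrite -(word_iff C _ [:: x4; x3; x2; x1; m; l; n] (TV 3) (TV 2) (TV 1)).
split => [/and5P [A B C' D /andP [E F]]|[A [B [C' [D [E F]]]]]]; first by do !split.
by move: A; rewrite /onehotF sem_And => ->; rewrite B C' D E /= F.
Qed.

Lemma sem_All C e t q : sem C e (FAll t q) = all (fun x => sem C (x :: e) q) (iota 0 (tv e t)).
Proof. by []. Qed.

Lemma allIP (P : nat -> bool) m : all P (iota 0 m) <-> forall x, x < m -> P x.
Proof.
split => [/allP H x Hx|H]; first by apply: H; rewrite mem_iota.
by apply/allP => x; rewrite mem_iota => /H.
Qed.
Lemma hasIP (P : nat -> bool) m : has P (iota 0 m) <-> exists x, x < m /\ P x.
Proof.
split => [/hasP [x Hx Px]|[x [Hx Px]]]; first by exists x; rewrite mem_iota in Hx.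
by apply/hasP; exists x; rewrite ?mem_iota.
Qed.

Lemma bound1 (P : nat -> nat -> Prop) : (forall a, exists k, P a k) ->
  forall m, exists L, forall a, a < m -> exists k, k < L /\ P a k.
Proof.
move=> H; elim => [|m [L HL]]; first by exists 0.
case: (H m) => k Hk; exists (maxn L k.+1) => a; rewrite ltnS leq_eqVlt => /orP [/eqP ->|Ha].
  by exists k; rewrite leq_max ltnSn orbT.
case: (HL a Ha) => k' [Hk' Pk']; exists k'; split => //.
by rewrite leq_max Hk'.
Qed.

Lemma bound2 (P : nat -> nat -> nat -> Prop) : (forall a b, exists k, P a b k) ->
  forall m, exists L, forall a b, a < m -> b < m -> exists k, k < L /\ P a b k.
Proof.
move=> H m.
have H1 : forall a, exists L, forall b, b < m -> exists k, k < L /\ P a b k.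
  by move=> a; apply: bound1.
case: (bound1 H1 m) => L HL; exists L => a b Ha Hb.
case: (HL a Ha) => L' [HL' H']; case: (H' b Hb) => k [Hk Pk].
by exists k; split => //; apply: ltn_trans HL'.
Qed.

Lemma TOP_char C (S : finType) rho (Phi : ((rho + rho).+1).-tuple S -> S) n :
  (forall m, exists l, sem C [:: m; l; n] (TOPF Phi)) <->
  ((forall x1 x2 x3 x4, QP C Phi x1 x2 x3 x4 n) /\
   (forall a b, exists k, C (kbc a b k)) /\ (forall j, exists v, C (rbc j v))).
Proof.
split.
  move=> H; split; last split.
  - move=> x1 x2 x3 x4; case: (H (x1 + x2 + x3 + x4).+1) => l.
    rewrite /TOPF sem_And => /andP [H1 _].
    move: H1; rewrite sem_All => /allIP /(_ x1); cbv beta.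
    rewrite sem_All => /(_ ltac:(simpl; lia)) /allIP /(_ x2); cbv beta.
    rewrite sem_All => /(_ ltac:(simpl; lia)) /allIP /(_ x3); cbv beta.
    rewrite sem_All => /(_ ltac:(simpl; lia)) /allIP /(_ x4); cbv beta.
    by move=> /(_ ltac:(simpl; lia)) /Q_iff.
  - move=> a b; case: (H (a + b).+1) => l.
    rewrite /TOPF sem_And => /andP [_ H2].
    move: H2; rewrite sem_All => /allIP /(_ a); cbv beta.
    rewrite sem_All => /(_ ltac:(simpl; lia)) /allIP /(_ b); cbv beta.
    rewrite sem_ex => /(_ ltac:(simpl; lia)) /hasIP [k [_]]; cbv beta.
    rewrite sem_ex => /hasIP [v [_]]; cbv beta.
    by rewrite sem_And !semE => /andP [Hk _]; exists k.
  - move=> j; case: (H j.+1) => l.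
    rewrite /TOPF sem_And => /andP [_ H2].
    move: H2; rewrite sem_All => /allIP /(_ j); cbv beta.
    rewrite sem_All => /(_ ltac:(simpl; lia)) /allIP /(_ 0); cbv beta.
    rewrite sem_ex => /(_ ltac:(simpl; lia)) /hasIP [k [_]]; cbv beta.
    rewrite sem_ex => /hasIP [v [_]]; cbv beta.
    by rewrite sem_And !semE => /andP [_ Hv]; exists v.
move=> [HQ [HK HR]] m.
case: (bound2 HK m) => L1 HL1.
case: (bound1 (P := fun j v => C (rbc j v)) HR m) => L2 HL2.
exists (maxn L1 L2); rewrite /TOPF sem_And; apply/andP; split.
  rewrite sem_All; apply/allIP => x1 Hx1; cbv beta.
  rewrite sem_All; apply/allIP => x2 Hx2; cbv beta.
  rewrite sem_All; apply/allIP => x3 Hx3; cbv beta.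
  rewrite sem_All; apply/allIP => x4 Hx4; cbv beta.
  by apply/Q_iff.
rewrite sem_All; apply/allIP => x1 Hx1; cbv beta.
rewrite sem_All; apply/allIP => x2 Hx2; cbv beta.
case: (HL1 x1 x2 Hx1 Hx2) => k [Hk Pk].
case: (HL2 x1 Hx1) => v [Hv Pv].
rewrite sem_ex; apply/hasIP; exists k; split; first by rewrite /= leq_max Hk.
cbv beta; rewrite sem_ex; apply/hasIP; exists v; split; first by rewrite /= leq_max Hv orbT.
by cbv beta; rewrite sem_And !semE Pk Pv.
Qed.

Definition ext (S : finType) rho (p : ((rho + rho).+1).-tuple S) : config S := fun i =>
  if ((- Z.of_nat rho <=? i) && (i <=? Z.of_nat rho))%Z
  then tnth p (inord (Z.to_nat (i + Z.of_nat rho))) else tnth p ord0.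
Definition PhiF (S : finType) (f : config S -> config S) rho (p : ((rho + rho).+1).-tuple S) : S :=
  f (ext p) 0%Z.
Definition patt (S : finType) rho (c : config S) (i : Z) : ((rho + rho).+1).-tuple S :=
  [tuple c (i + Z.of_nat j - Z.of_nat rho)%Z | j < (rho + rho).+1].

Lemma local_phi (S : finType) (f : config S -> config S) rho :
  (forall (x : config S) (i : Z), f (Defs.shift x) i = Defs.shift (f x) i) ->
  (forall x y, agree x y rho -> f x 0%Z = f y 0%Z) ->
  forall c i, f c i = PhiF f (patt rho c i).
Proof.
move=> Hs Hr c i; rewrite (translate0 Hs) /PhiF; apply: Hr => t Ht.
rewrite /ext /patt.
have -> : ((- Z.of_nat rho <=? t) && (t <=? Z.of_nat rho))%Z = true.
  by apply/andP; split; apply/Z.leb_le; lia.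
rewrite tnth_mktuple inordK; last by apply/ltP; lia.
congr c; lia.
Qed.

Lemma rk_inj (S : finType) (c d : S) : rk c = rk d -> c = d.
Proof. by move=> /val_inj /enum_rank_inj. Qed.

Lemma extract (S : finType) (f : config S -> config S) rho :
  (forall (x : config S) (i : Z), f (Defs.shift x) i = Defs.shift (f x) i) ->
  (forall x y, agree x y rho -> f x 0%Z = f y 0%Z) ->
  forall C n,
  (forall x1 x2 x3 x4, QP C (@PhiF S f rho) x1 x2 x3 x4 n) ->
  (forall a b, exists k, C (kbc a b k)) -> (forall j, exists v, C (rbc j v)) ->
  exists w : seq S, word_code w = n /\ language (nonwandering f) w.
Proof.
move=> Hs Hr C n HQ HK HR.
have OH : forall t a b, onehotP C #|S| t a b by move=> t a b; case: (HQ t a b 0).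
have SI : forall t a b, shinvP C #|S| t a b by move=> t a b; case: (HQ t a b 0) => _ [].
have LO : forall t a b, localP C (@PhiF S f rho) t a b by move=> t a b; case: (HQ t a b 0) => _ [_ []].
have RE : forall x1 x2 x3 x4, retP C #|S| x1 x2 x3 x4 by move=> x1 x2 x3 x4; case: (HQ x1 x2 x3 x4) => _ [_ [_ []]].
have WO : forall j v v', wordP C #|S| j v v' by move=> j v v'; case: (HQ j v v' 0) => _ [_ [_ [_ []]]].
have R0 : C (rbc 0 n) by case: (HQ 0 0 0 0) => _ [_ [_ [_ []]]].
case: (OH 0 0 0) => [[s00 [Hs0 _]] _].
pose s0 : S := enum_val (Ordinal Hs0).
pose sym t a b := odflt s0 [pick c : S | C (zbc t a b (rk c))].
have sym_spec : forall t a b, C (zbc t a b (rk (sym t a b))).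
  move=> t a b; rewrite /sym; case: pickP => [c -> //|H].
  case: (OH t a b) => [[s [Hs1 Hc]] _].
  have := H (enum_val (Ordinal Hs1)); rewrite /rk enum_valK /= Hc //.
have sym_uniq : forall t a b s, s < #|S| -> C (zbc t a b s) -> s = rk (sym t a b).
  move=> t a b s Hs1 Hc; case: (OH t a b) => [_ U]; apply: U Hc (sym_spec _ _ _) => //.
  exact: ltn_ord.
have sym_eq : forall t a b c, C (zbc t a b (rk c)) -> c = sym t a b.
  by move=> t a b c Hc; apply: rk_inj; apply: sym_uniq Hc; exact: ltn_ord.
have sym_sh : forall t a b d, sym t (a + d) (b + d) = sym t a b.
  move=> t a b; elim => [|d IH]; first by rewrite !addn0.
  rewrite -IH !addnS; symmetry; apply: sym_eq.
  rewrite -(SI t (a + d) (b + d)) ?sym_spec //; exact: ltn_ord.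
pose Zc t (i : Z) := sym t (Z.to_nat i) (Z.to_nat (- i)).
have sym_Z : forall t a b, sym t a b = Zc t (Z.of_nat a - Z.of_nat b)%Z.
  move=> t a b; rewrite /Zc.
  set a0 := Z.to_nat (Z.of_nat a - Z.of_nat b).
  set b0 := Z.to_nat (- (Z.of_nat a - Z.of_nat b)).
  have Ea : a = a0 + minn a b by rewrite /a0; lia.
  have Eb : b = b0 + minn a b by rewrite /b0; lia.
  by rewrite {1}Eb {1}Ea sym_sh.
have step : forall t i, Zc t.+1 i = f (Zc t) i.
  move=> t i; rewrite (local_phi Hs Hr); symmetry.
  have -> : Zc t.+1 i = sym t.+1 (Z.to_nat i + rho) (Z.to_nat (- i) + rho).
    by rewrite sym_Z; congr Zc; lia.
  apply: sym_eq; apply: LO => j; rewrite /patt tnth_mktuple.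
  have -> : Zc t (i + Z.of_nat j - Z.of_nat rho)%Z = sym t (Z.to_nat i + j) (Z.to_nat (- i) + rho).
    by rewrite sym_Z; congr Zc; lia.
  exact: sym_spec.
pose y := Zc 0.
have orbit : forall t, Zc t = ssrnat.iter t f y.
  elim => [|t IH] //=; rewrite -IH; apply: functional_extensionality => i; exact: step.
have NW : nonwandering f y.
  move=> m r; case: (HK m r) => k Hk; exists k; rewrite -orbit.
  case: (RE m r k 0 Hk (leq0n _)) => Hmk _; split => // i Hi.
  have [Hi0|Hi0] : (0 <= i \/ i < 0)%Z by lia.
    have Ha : Z.to_nat i <= r by lia.
    case: (RE m r k _ Hk Ha) => _ Hb.
    rewrite /y /Zc (_ : Z.to_nat (- i) = 0); last by lia.
    apply: sym_eq; case: (Hb (rk (sym 0 (Z.to_nat i) 0)) (ltn_ord _)) => -> _.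
    exact: sym_spec.
  have Ha : Z.to_nat (- i) <= r by lia.
  case: (RE m r k _ Hk Ha) => _ Hb.
  rewrite /y /Zc (_ : Z.to_nat i = 0); last by lia.
  apply: sym_eq; case: (Hb (rk (sym 0 0 (Z.to_nat (- i)))) (ltn_ord _)) => _ ->.
  exact: sym_spec.
have WD : forall V v j, v <= V -> C (rbc j v) -> exists w : seq S,
    word_code w = v /\ w = [seq y (Z.of_nat (j + i)) | i <- iota 0 (size w)].
  elim => [|V IH] v j Hv Hc.
    by exists [::]; move: Hv; rewrite leqn0 => /eqP ->.
  case: (HR j.+1) => v' Hv'.
  case: (WO j v v' Hc Hv') => [->|[s [Hs1 [Hz Ev]]]]; first by exists [::].
  have Hlt : v' <= V by move: Hv; rewrite Ev; nia.
  case: (IH v' j.+1 Hlt Hv') => w' [Hw' Ew'].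
  exists (sym 0 j 0 :: w'); split.
    by rewrite /= Hw' Ev (sym_uniq _ _ _ _ Hs1 Hz) addn1.
  rewrite /= addn0; congr cons.
    by rewrite sym_Z /y; congr Zc; lia.
  have -> : iota 1 (size w') = map (addn 1) (iota 0 (size w')) by rewrite -iotaDl.
  rewrite {1}Ew' -map_comp; apply: eq_map => i /=; congr y; lia.
case: (WD n n 0 (leqnn n) R0) => w [Hw Ew].
exists w; split => //; exists y; split => //.

Qed.

Lemma pr_ne x y x' y' : x <> x' -> pr x y <> pr x' y'.
Proof. by move=> H /pr_inj []. Qed.

Definition decb (P : Prop) : bool := if excluded_middle_informative P then true else false.
Lemma decbP (P : Prop) : decb P <-> P.
Proof. by rewrite /decb; case: excluded_middle_informative. Qed.

Lemma construct (S : finType) (f : config S -> config S) rho :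
  (forall (x : config S) (i : Z), f (Defs.shift x) i = Defs.shift (f x) i) ->
  (forall x y, agree x y rho -> f x 0%Z = f y 0%Z) ->
  forall (w : seq S) (y : config S), nonwandering f y ->
  w = [seq y (Z.of_nat j) | j <- iota 0 (size w)] ->
  exists C, (forall x1 x2 x3 x4, QP C (@PhiF S f rho) x1 x2 x3 x4 (word_code w)) /\
  (forall a b, exists k, C (kbc a b k)) /\ (forall j, exists v, C (rbc j v)).
Proof.
move=> Hs Hr w y NW Hw.
pose z t (a b : nat) := ssrnat.iter t f y (Z.of_nat a - Z.of_nat b)%Z.
pose C p := decb ((exists t a b, p = zbc t a b (rk (z t a b))) \/
   (exists n r k, p = kbc n r k /\ n <= k /\ agree y (ssrnat.iter k f y) r) \/
   (exists j, p = rbc j (word_code (drop j w)))).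
have CZ : forall t a b s, C (zbc t a b s) <-> s = rk (z t a b).
  move=> t a b s; rewrite decbP; split.
    case=> [[t' [a' [b' E]]]|[[n' [r' [k' [E _]]]]|[j' E]]].
    + move: E => /pr_inj [_] /pr_inj [->] /pr_inj [->] /pr_inj [->] -> //.
    + by move: E => /pr_inj [].
    + by move: E => /pr_inj [].
  by move=> ->; left; exists t, a, b.
have CK : forall n r k, C (kbc n r k) <-> n <= k /\ agree y (ssrnat.iter k f y) r.
  move=> n r k; rewrite decbP; split.
    case=> [[t' [a' [b' E]]]|[[n' [r' [k' [E H]]]]|[j' E]]].
    + by move: E => /pr_inj [].
    + by move: E => /pr_inj [_] /pr_inj [->] /pr_inj [-> ->].
    + by move: E => /pr_inj [].
  by move=> H; right; left; exists n, r, k.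
have CR : forall j v, C (rbc j v) <-> v = word_code (drop j w).
  move=> j v; rewrite decbP; split.
    case=> [[t' [a' [b' E]]]|[[n' [r' [k' [E _]]]]|[j' E]]].
    + by move: E => /pr_inj [].
    + by move: E => /pr_inj [].
    + by move: E => /pr_inj [_] /pr_inj [-> ->].
  by move=> ->; right; right; exists j.
have CZb : forall t a b s, C (zbc t a b s) = (s == rk (z t a b)).
  move=> t a b s; apply/idP/eqP => /CZ //.
exists C; split; last split.
- move=> x1 x2 x3 x4; split; last split; last split; last split; last split.
  + split; first by exists (rk (z x1 x2 x3)); split; [exact: ltn_ord| apply/CZ].
    by move=> s s' _ _ /CZ -> /CZ ->.
  + move=> s _; rewrite !CZb /z; congr (_ == rk (ssrnat.iter _ _ _ _)); lia.
  + move=> p Hp.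
    have Ep : p = patt rho (ssrnat.iter x1 f y) (Z.of_nat x2 - Z.of_nat x3)%Z.
      apply: eq_from_tnth => j; rewrite /patt tnth_mktuple.
      have := Hp j; rewrite CZb => /eqP /rk_inj ->; rewrite /z; congr (ssrnat.iter _ _ _ _); lia.
    rewrite CZb /= Ep -(local_phi Hs Hr) /z /=; apply/eqP; congr (rk (f _ _)); lia.
  + move=> /CK [Hk Ha] Hle; split => // s _; rewrite !CZb /z /=.
    rewrite -!Ha //; lia.
  + move=> /CR -> /CR ->.
    case: (ltnP x1 (size w)) => Hj; last by left; rewrite drop_oversize.
    right; exists (rk (nth (y 0%Z) w x1)); split; first exact: ltn_ord.
    rewrite CZb (drop_nth (y 0%Z) Hj) /= addn1; split => //.
    apply/eqP; congr rk; rewrite /z /= Hw (nth_map 0) ?size_iota // nth_iota //.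
    by congr y; lia.
  + by apply/CR; rewrite drop0.
- move=> a b; case: (NW a b) => k [Hk Ha]; exists k; exact/CK.
- by move=> j; exists (word_code (drop j w)); apply/CR.
Qed.

Theorem lemma3 (S : finType) (f : config S -> config S)
  (Hf : cellular_automaton f) :
  Sigma11 (fun n : nat =>
    exists w : seq S, word_code w = n /\ language (nonwandering f) w).
Proof.
case: Hf => Hc Hs.
case: (uniform_radius Hc) => rho Hr.
exists (recR (TOPF (@PhiF S f rho))); split; first exact: recR_rec.
move=> n; split.
  move=> [w [<- [y [NW Hw]]]].
  case: (construct Hs Hr NW Hw) => C HC; exists C.
  exact: (proj2 (TOP_char C (@PhiF S f rho) (word_code w)) HC).
move=> [C HC]; have := proj1 (TOP_char C (@PhiF S f rho) n) HC.
move=> [HQ [HK HR]]; exact: (extract Hs Hr HQ HK HR).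
Qed.
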